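(* Let $f\in A[X]$ be monic with discriminant $\Delta=\mathrm{Res}_X(f,f')\neq 0$, $r=v(\Delta)$, and let $N>r$ be an integer. Let $f_N\in (A/\pi^NA)[X]$ be the reduction of $f$ modulo $\pi^N$ and $S_N\subseteq A/\pi^NA$ its set of roots. Then the number of roots of $f$ in $K$ is at most $|S_N/\approx|$.
   Context: $K$ is a field complete with respect to a non-archimedean discrete valuation $v$, normalized by $v(\pi)=1$ for a uniformizer $\pi$ of the valuation ring $A=\{x\in K: v(x)\geq 0\}$; the residue field $A/\pi A$ is finite. The equivalence relation $\approx$ on $S_N$ is: $x\approx y$ iff either $N\leq r$ and $x=y$, or $N>r$ and $x\equiv y \pmod{\overline{\pi}^{\,r+1}}$, where $\overline{\pi}$ is the image of $\pi$ in $A/\pi^NA$. *)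

(* Defs.v *)
From HB Require Import structures.
From mathcomp Require Import all_boot all_order all_algebra.
From mathcomp Require Import boolp classical_sets cardinality.
Set Implicit Arguments. Unset Strict Implicit. Unset Printing Implicit Defensive.
Import Order.TTheory GRing.Theory Num.Theory.
Local Open Scope ring_scope.
Local Open Scope classical_set_scope.

(* A valuation is modelled as v : K -> int; its value at 0 is irrelevant
   (v(0) = +oo is encoded by the [x = 0 \/ ...] disjunctions below). *)

Definition vge (K : fieldType) (v : K -> int) (x : K) (k : int) : Prop :=
  x = 0 \/ k <= v x.

Definition vcong (K : fieldType) (v : K -> int) (k : int) (x y : K) : Prop :=
  vge v (x - y) k.

Definition valring (K : fieldType) (v : K -> int) : set K := [set x | vge v x 0].

Definition complete_dvf_finres (K : fieldType) (v : K -> int) : Prop :=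
  [/\
      (forall x y : K, x != 0 -> y != 0 -> v (x * y) = v x + v y),
      (forall x y : K, x != 0 -> y != 0 -> x + y != 0 ->
          Num.min (v x) (v y) <= v (x + y)),
      (exists pi : K, pi != 0 /\ v pi = 1),
      (forall u : nat -> K,
         (forall n : int, exists M : nat, forall i j : nat,
              (M <= i)%N -> (M <= j)%N -> vge v (u i - u j) n) ->
         exists l : K, forall n : int, exists M : nat, forall i : nat,
              (M <= i)%N -> vge v (u i - l) n) &
      (exists s : seq K, (forall b, b \in s -> valring v b) /\
         forall a, valring v a -> exists2 b, b \in s & vcong v 1 a b)].

Definition poly_over_valring (K : fieldType) (v : K -> int) (f : {poly K}) : Prop :=
  forall i : nat, valring v f`_i.

(* Elements of A whose class in A/pi^N A is a root of the reduction f_N. *)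
Definition lift_rootsN (K : fieldType) (v : K -> int) (f : {poly K}) (N : int) : set K :=
  [set a | valring v a /\ vge v f.[a] N].

(* The set S_N / ~ (for N > r), each class being represented by its full
   preimage in A: the class of (a mod pi^N) is
   { b in A : f_N(b mod pi^N) = 0, b = a mod pi^(r+1) }. *)
Definition rootsN_mod_approx (K : fieldType) (v : K -> int) (f : {poly K})
    (N r : int) : set (set K) :=
  [set C | exists2 a, lift_rootsN v f N a &
     C = [set b | lift_rootsN v f N b /\ vcong v (r + 1) b a]].

Definition rootsK (K : fieldType) (f : {poly K}) : set K := [set x | root f x].

(* Main.v *)
From HB Require Import structures.
From mathcomp Require Import all_boot all_order all_algebra.
From mathcomp Require Import boolp classical_sets cardinality.
From mathcomp Require Import zify.
Require Import Defs.
Set Implicit Arguments. Unset Strict Implicit. Unset Printing Implicit Defensive.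
Import Order.TTheory GRing.Theory Num.Theory.
Local Open Scope ring_scope.

Section VR.
Variables (K : fieldType) (v : K -> int).

Definition VH := (forall x y : K, x != 0 -> y != 0 -> v (x * y) = v x + v y) /\
  (forall x y : K, x != 0 -> y != 0 -> x + y != 0 -> Num.min (v x) (v y) <= v (x + y)).

Section H.
Hypothesis H : VH.
Lemma v1 : v 1 = 0.
Proof. have := H.1 1 1 (oner_neq0 _) (oner_neq0 _); rewrite mulr1; lia. Qed.
Lemma vN1 : v (-1) = 0.
Proof.
have n1 : (-1 : K) != 0 by rewrite oppr_eq0 oner_neq0.
have := H.1 _ _ n1 n1; rewrite mulrNN mulr1 v1; lia.
Qed.
Lemma vN x : x != 0 -> v (- x) = v x.
Proof.
move=> x0; have n1 : (-1 : K) != 0 by rewrite oppr_eq0 oner_neq0.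
by rewrite -mulN1r H.1 // vN1 add0r.
Qed.
Lemma vge_add x y k : vge v x k -> vge v y k -> vge v (x + y) k.
Proof.
rewrite /vge; case: (eqVneq x 0) => [->|x0]; first by rewrite add0r.
case: (eqVneq y 0) => [->|y0]; first by rewrite addr0.
case: (eqVneq (x + y) 0) => [->|s0]; first by left.
move=> [/eqP|hx]; first by rewrite (negbTE x0).
move=> [/eqP|hy]; first by rewrite (negbTE y0).
right; apply: le_trans (H.2 _ _ x0 y0 s0).
by rewrite le_min hx hy.
Qed.
Lemma vge_opp x k : vge v x k -> vge v (- x) k.
Proof.
rewrite /vge; case: (eqVneq x 0) => [->|x0]; first by rewrite oppr0; left.
rewrite vN //; move=> [/eqP|h]; [by rewrite (negbTE x0)|by right].
Qed.
Lemma vge_mul x y k l : vge v x k -> vge v y l -> vge v (x * y) (k + l).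
Proof.
rewrite /vge; case: (eqVneq x 0) => [->|x0]; first by rewrite mul0r; left.
case: (eqVneq y 0) => [->|y0]; first by rewrite mulr0; left.
move=> [/eqP|hx]; first by rewrite (negbTE x0).
move=> [/eqP|hy]; first by rewrite (negbTE y0).
right; rewrite H.1 //; exact: lerD.
Qed.
Lemma vge_le x k l : vge v x k -> l <= k -> vge v x l.
Proof. by move=> [->|h] lk; [left|right; exact: le_trans h]. Qed.
End H.

Definition vring : {pred K} := fun x => `[< VH -> vge v x 0 >].

Lemma vring_closed : GRing.subring_closed vring.
Proof.
split.
- apply/asboolP => H; by right; rewrite (v1 H).
- move=> x y /asboolP hx /asboolP hy; apply/asboolP => H.
  by apply: (vge_add H); [apply: hx|apply: (vge_opp H); apply: hy].
- move=> x y /asboolP hx /asboolP hy; apply/asboolP => H.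
  by rewrite -(addr0 0); apply: (vge_mul H); [apply: hx|apply: hy].
Qed.

HB.instance Definition _ := GRing.isSubringClosed.Build K vring vring_closed.

Record vR := VR { vval : K; vvalP : vval \in vring }.
HB.instance Definition _ := [isSub for vval].
HB.instance Definition _ := [Choice of vR by <:].
HB.instance Definition _ := [SubChoice_isSubComNzRing of vR by <:].

End VR.

Lemma map_resultant_inj (aR rR : comNzRingType) (g : {rmorphism aR -> rR})
  (p q : {poly aR}) : injective g ->
  g (resultant p q) = resultant (map_poly g p) (map_poly g q).
Proof.
move=> ig; rewrite /resultant /Sylvester_mx !size_map_inj_poly //.
rewrite -det_map_mx /= map_col_mx; congr (\det (col_mx _ _));
  by apply: map_lin1_mx => w; rewrite map_poly_rV rmorphM /= map_rVpoly.
all: exact: rmorph0.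
Qed.

Lemma resultantC (R : comNzRingType) (p : {poly R}) (c : R) :
  resultant p c%:P = c ^+ (size p).-1.
Proof.
rewrite /resultant.
have -> : Sylvester_mx p c%:P = c%:M.
  apply/matrixP => i j; rewrite Sylvester_mxE !mxE.
  have h0 : (size c%:P).-1 = 0%N.
    by have := size_polyC_leq1 c; case: (size _) => [|[]].
  case: splitP => k Hk.
    by case: k Hk => k kl _; exfalso; move: kl; rewrite h0.
  have {Hk} Hk : nat_of_ord i = k.
    by move: Hk; move: (nat_of_ord i) => n; rewrite h0 add0n.
  rewrite coefC.
  case: (ltngtP k j) => [kj|jk|kj].
  - by rewrite subn_eq0 leqNgt kj /= -val_eqE /= Hk ltn_eqF /= ?mulr0n ?mulr1n.
  - by rewrite -val_eqE /= Hk (gtn_eqF jk) /= ?mulr0n.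
  - by rewrite kj subnn -val_eqE /= Hk kj eqxx /= ?mulr0n ?mulr1n.
rewrite det_scalar; congr (_ ^+ _).
by have := size_polyC_leq1 c; case: (size _) => [|[]].
Qed.

Section Main.
Variables (K : fieldType) (v : K -> int).
Hypothesis H : VH v.
Local Notation R := (vR v).

Lemma valP' (a : R) : vge v (val a) 0.
Proof. by have /asboolP := vvalP a; apply. Qed.

Lemma inR x : vge v x 0 -> x \in vring v.
Proof. by move=> hx; apply/asboolP. Qed.

Lemma val_eq0 (a : R) : (val a = 0) -> a = 0.
Proof. by move=> h; apply: val_inj; rewrite h rmorph0. Qed.

Lemma vge_exp x k (n : nat) : vge v x k -> vge v (x ^+ n) (k *+ n).
Proof.
move=> hx; elim: n => [|n IH]; first by right; rewrite expr0 (v1 H).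
by rewrite exprS mulrS; apply: (vge_mul H).
Qed.

Lemma vge_sum (I : Type) (r : seq I) (F : I -> K) k :
  (forall i, vge v (F i) k) -> vge v (\sum_(i <- r) F i) k.
Proof.
move=> hF; elim: r => [|a r IH]; first by rewrite big_nil; left.
by rewrite big_cons; apply: (vge_add H).
Qed.

Definition liftp (f : {poly K}) : {poly R} :=
  \poly_(i < size f) insubd (0 : R) f`_i.

Lemma liftpK f : poly_over_valring v f -> map_poly val (liftp f) = f.
Proof.
move=> hf; apply/polyP => i; rewrite coef_map coef_poly.
case: ltnP => hi.
  change (val (insubd (0:R) f`_i) = f`_i).
  by rewrite insubdK //; apply: inR; exact: hf.
by rewrite raddf0 nth_default.
Qed.

Lemma integral f x : poly_over_valring v f -> f \is monic -> root f x ->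
  vge v x 0.
Proof.
move=> hf mf /eqP rx.
case: (eqVneq x 0) => [->|x0]; first by left.
case: (lerP 0 (v x)) => [|vxn]; first by right.
exfalso.
have z0 : x^-1 != 0 by rewrite invr_eq0.
have vz : vge v x^-1 1.
  right; have := H.1 _ _ x0 z0; rewrite mulfV // (v1 H); lia.
have sf : size f = (size f).-1.+1.
  by rewrite prednK // lt0n size_poly_eq0 monic_neq0.
set n := (size f).-1 in sf.
have lc : f`_n = 1 by have /monicP := mf; rewrite /lead_coef.
move: rx; rewrite horner_coef sf big_ord_recr /= lc mul1r => rx.
have : \sum_(i < n) f`_i * x^-1 ^+ (n - i) + 1 = 0.
  have -> : 1 = x ^+ n * x^-1 ^+ n by rewrite -exprMn mulfV // expr1n.
  transitivity ((\sum_(i < n) f`_i * x ^+ i + x ^+ n) * x^-1 ^+ n);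
    last by rewrite rx mul0r.
  rewrite mulrDl mulr_suml; congr (_ + _).
  apply: eq_bigr => i _.
  rewrite -mulrA; congr (_ * _).
  have hi : (i <= n)%N by apply: ltnW.
  have e : x^-1 ^+ n = x^-1 ^+ (n - i) * x^-1 ^+ i by rewrite -exprD subnK.
  by rewrite e mulrCA -exprMn mulfV // expr1n mulr1.
move/eqP; rewrite addr_eq0 => /eqP h1.
have : vge v 1 1.
  have -> : (1:K) = - \sum_(i < n) f`_i * x^-1 ^+ (n - i) by rewrite h1 opprK.
  apply: (vge_opp H); apply: vge_sum => i.
  rewrite -(add0r 1); apply: (vge_mul H); first exact: hf.
  apply: (vge_le (vge_exp (n - i) vz)).
  have hp : (0 < n - i)%N by rewrite subn_gt0.
  case: (n - i)%N hp => // m _; rewrite mulrS lerDl; exact: mulrn_wge0.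
case=> [/eqP|]; first by rewrite oner_eq0.
by rewrite (v1 H).
Qed.

Lemma size_gt1 (f : {poly K}) (x : K) : f \is monic -> root f x -> (1 < size f)%N.
Proof.
move=> mf rx; rewrite ltnNge; apply/negP => s1.
have e := size1_polyC s1.
move: rx mf; rewrite e rootC monicE lead_coefC => /eqP c0 /eqP c1.
by move: c0; rewrite c1; apply/eqP; rewrite oner_eq0.
Qed.

Lemma bezout (f : {poly K}) (x : K) : poly_over_valring v f -> f \is monic -> root f x ->
  exists2 w, vge v w 0 & resultant f f^`() = w * f^`().[x].
Proof.
move=> hf mf rx.
have xA := integral hf mf rx.
have hfA := liftpK hf; set fA := liftp f in hfA.
have xR : x \in vring v := inR xA.
pose xa : R := Sub x xR.
have vx : val xa = x by rewrite SubK.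
have fA0 : fA.[xa] = 0.
  by apply: val_eq0; rewrite -horner_map /= hfA ?vx; apply/eqP.
have hdA : map_poly val fA^`() = f^`() by rewrite -deriv_map hfA.
have ev : val (fA^`().[xa]) = f^`().[x] by rewrite -horner_map hdA; congr (_.[_]); exact: vx.
have sfA : size fA = size f by rewrite -hfA size_map_inj_poly //; exact: val_inj.
have sdA : size fA^`() = size f^`() by rewrite -hdA size_map_inj_poly //; exact: val_inj.
case: (leqP 2 (size f^`())) => hs.
  have s1 : (1 < size fA^`())%N by rewrite sdA.
  have s0 : (1 < size fA)%N.
    rewrite sfA; apply: leq_trans s1 _; rewrite sdA; apply: ltnW.
    by apply: lt_size_deriv; exact: monic_neq0.
  have [[u w] /= _ Hr] := resultant_in_ideal s0 s1.
  exists (val w.[xa]); first exact: valP'.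
  have := congr1 (horner^~ xa) Hr; rewrite /= hornerC hornerD !hornerM fA0 mulr0 add0r.
  move=> e.
  have -> : resultant f f^`() = val (resultant fA fA^`()).
    by rewrite map_resultant_inj; [rewrite hfA hdA | exact: val_inj].
  by rewrite e rmorphM /= ev.
have sd : (size f^`() <= 1)%N by rewrite -ltnS.
have -> : f^`() = (f^`()`_0)%:P by apply: size1_polyC.
rewrite hornerC resultantC.
have := size_gt1 mf rx; case: (size f) => [|[|n]] // _ /=.
exists (f^`()`_0 ^+ n); last by rewrite exprSr.
have c0 : vge v (f^`()`_0) 0 by rewrite -hdA coef_map; exact: valP'.
by have := vge_exp n c0; rewrite mul0rn.
Qed.

Lemma roots_sep (f : {poly K}) (x y : K) : poly_over_valring v f -> f \is monic ->
  resultant f f^`() != 0 -> root f x -> root f y ->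
  vcong v (v (resultant f f^`()) + 1) y x -> y = x.
Proof.
move=> hf mf hD rx ry hc.
case: (eqVneq y x) => // nyx; exfalso.
have [w w0 hw] := bezout hf mf rx.
have xA := integral hf mf rx; have yA := integral hf mf ry.
have hfA := liftpK hf; set fA := liftp f in hfA.
pose xa : R := Sub x (inR xA); pose ya : R := Sub y (inR yA).
have vx : val xa = x by rewrite SubK.
have vy : val ya = y by rewrite SubK.
have vx' : (val : {rmorphism R -> K}) xa = x := vx.
have vy' : (val : {rmorphism R -> K}) ya = y := vy.
have ev (p : {poly R}) (a : R) : val p.[a] = (map_poly val p).[val a].
  by rewrite horner_map.
have /factor_theorem [hA ehA] : root fA xa.
  by apply/eqP/val_eq0; rewrite ev hfA vx; apply/eqP.
have /factor_theorem [qA eqA] : root hA ya.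
  apply/eqP/val_eq0.
  have : val (fA.[ya]) = 0 by rewrite ev hfA vy; apply/eqP.
  rewrite ehA hornerM hornerXsubC rmorphM rmorphB ?vy' ?vx' => /eqP.
  by rewrite mulf_eq0 subr_eq0 (negbTE nyx) orbF => /eqP.
have hdA : map_poly val fA^`() = f^`() by rewrite -deriv_map hfA.
have e1 : f^`().[x] = val (qA.[xa]) * (x - y).
  rewrite -hdA -vx -ev ehA derivM derivXsubC mulr1 hornerD hornerM.
  rewrite hornerXsubC subrr mulr0 add0r eqA hornerM hornerXsubC rmorphM rmorphB.
  by rewrite ?vx' ?vy'.
rewrite e1 in hw.
have q0 := valP' qA.[xa]; set q := val qA.[xa] in q0 hw.
move: hD; rewrite hw !mulf_eq0 !negb_or => /and3P [wn qn dn].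
have hv : v (resultant f f^`()) = v w + (v q + v (x - y)) by rewrite hw !H.1 // mulf_neq0.
have hyx : v (resultant f f^`()) + 1 <= v (x - y).
  case: hc => [/eqP|]; first by rewrite subr_eq0 (negbTE nyx).
  by rewrite -opprB (vN H).
case: w0 => [/eqP|w0]; first by rewrite (negbTE wn).
case: q0 => [/eqP|q0]; first by rewrite (negbTE qn).
move: hv hyx w0 q0; lia.
Qed.
End Main.

Unset Implicit Arguments.
Set Strict Implicit.
Local Open Scope classical_set_scope.
Local Open Scope card_scope.

Theorem lemma3p5 (K : fieldType) (v : K -> int) (f : {poly K}) (N : int) :
  complete_dvf_finres v ->
  poly_over_valring v f ->
  f \is monic ->
  resultant f f^`() != 0 ->
  v (resultant f f^`()) < N ->
  rootsK f #<= rootsN_mod_approx v f N (v (resultant f f^`())).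
Proof.
move=> [Hmul Hum _ _ _] hf mf hD hN.
have H : VH v := conj Hmul Hum.
set r := v (resultant f f^`()).
apply/pcard_leP/injfunPex.
exists (fun x => [set b | lift_rootsN v f N b /\ vcong v (r + 1) b x]).
  move=> x rx; exists x => //; split; first exact: (integral H hf mf rx).
  by left; apply/eqP.
move=> x y rx ry e.
rewrite !in_setE in rx ry.
have {}rx : root f x := rx.
have {}ry : root f y := ry.
have ly : lift_rootsN v f N y.
  by split; [have := integral H hf mf ry | left; apply/eqP].
have : [set b | lift_rootsN v f N b /\ vcong v (r + 1) b y] y.
  by split => //; left; rewrite subrr.
rewrite -e => -[_ hc].
by apply/esym; apply: (roots_sep H hf mf hD rx ry hc).
Qed.
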